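(* Let $\Delta$ be a finite set of quantifier-free insertion queries over the graph schema $\{E\}$. Then $(q_{\mathrm{Reach}},\Delta\cup\Delta_E)$ can be maintained in DynFO for directed acyclic graphs. Furthermore, this can be done by a program such that for every quantifier-free insertion query $\rho(\bar p)$ in $\Delta$ there is a first-order formula $\gamma_\rho(\bar p)$ over the input and auxiliary schema (a guard) such that in every state reached for an acyclic graph $G$ and every tuple $\bar a$, $\gamma_\rho(\bar a)$ holds if and only if $\rho(\bar a)(G)$ contains a cycle.
   Context: Framework. A schema $\tau$ consists of relation symbols with arities and constant symbols; a database over $\tau$ with a finite domain $D$ interprets them. A replacement rule for a relation symbol $R$ is $R := \mu_R(\bar p;\bar x)$, where $\mu_R$ is a first-order formula over $\tau$, $\bar x$ has the arity of $R$, and $\bar p$ is a tuple of parameter variables. A replacement query $\rho(\bar p)$ is a set of replacement rules for distinct relation symbols, all with the same parameter tuple $\bar p$; it is parameter-free if $\bar p$ is empty, and quantifier-free (resp. existential, i.e. in $\mathrm{FO}[\exists^*]$) if all its formulas are. A change $\delta=\rho(\bar a)$ consists of a replacement query $\rho$ and a tuple $\bar a$ of domain elements of the arity of $\bar p$; $\delta(\mathcal D)$ is obtained from $\mathcal D$ by replacing every relation $R$ having a rule in $\rho$ by $\{\bar b : \mathcal D\models \mu_R(\bar a;\bar b)\}$. An insertion query is one in which every $\mu_R$ has the form $R(\bar x)\lor\varphi_R$; a deletion query one in which every $\mu_R$ has the form $R(\bar x)\land\varphi_R$. The single-tuple insertion $\mathrm{ins}_R(\bar p)$ is $R:=R(\bar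 x)\lor \bar x=\bar p$, the single-tuple deletion $\mathrm{del}_R(\bar p)$ is $R:=R(\bar x)\land\neg(\bar x=\bar p)$; $\Delta_\tau$ is the set of all single-tuple insertions and deletions for the relation symbols of $\tau$ ($\Delta_E$ for graphs with edge relation $E$). A dynamic program with input schema $\tau_{in}$ and auxiliary schema $\tau_{aux}$ operates on states $(D,\mathcal I,\mathcal A)$ consisting of an input database $\mathcal I$ and an auxiliary database $\mathcal A$ over a common fixed finite domain $D$. For every allowed replacement query $\rho(\bar p)$ and every auxiliary symbol $T$ it has an update formula $\varphi_T(\bar p;\bar x)$ over $\tau_{in}\cup\tau_{aux}$. On a change $\delta=\rho(\bar a)$ the new state has input $\delta(\mathcal I)$ and each $T$ becomes $\{\bar b : (\mathcal I,\mathcal A)\models\varphi_T(\bar a,\bar b)\}$, evaluated in the old state. A dynamic query is a pair $(q,\Delta)$ of a query $q$ and a set $\Delta$ of replacement queries. A program maintains $(q,\Delta)$, $q$ of arity $k$, if it has a $k$-ary auxiliary relation $Q$ such that for every domain, starting from the empty input and empty auxiliary database, after every nonempty sequence $\alpha$ of changes from $\Delta$ the relation $Q$ equals $q(\alpha(\mathcal I_\emptyset))$. DynFO is the class of dynamic queries maintainable with first-order update formulas; DynProp with quantifier-free update formulas. When maintenance is ''for'' a class of inputs, only change sequences all of whose intermediate inputs lie in that class are considered. Graphs are structures with one binary relation $E$; $q_{\mathrm{Reach}}$ maps a directed graph to the set of pairs $(u,v)$ such that there is a directed path from $u$ to $v$. *)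

(* Defs.v *)
From HB Require Import structures.
From mathcomp Require Import all_boot.
Set Implicit Arguments. Unset Strict Implicit. Unset Printing Implicit Defensive.

Inductive sym := SymE | SymAux of nat.

(* First-order formulas; variables are de Bruijn indices (nat).
   At top level a formula is evaluated in an environment (list of domain
   elements); index i denotes the i-th entry, and each quantifier pushes
   the quantified element at index 0. *)
Inductive formula :=
| FTrue | FFalse
| FRel of sym & seq nat
| FEq of nat & nat
| FNot of formula
| FAnd of formula & formula
| FOr of formula & formula
| FEx of formula
| FAll of formula.

Fixpoint qf (f : formula) : bool :=
  match f with
  | FEx _ | FAll _ => false
  | FNot g => qf g
  | FAnd g h | FOr g h => qf g && qf h
  | _ => true
  end.

Fixpoint input_only (f : formula) : bool :=
  match f with
  | FRel (SymAux _) _ => false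
  | FNot g | FEx g | FAll g => input_only g
  | FAnd g h | FOr g h => input_only g && input_only h
  | _ => true
  end.

(* A replacement query over {E}: parameter arity rq_par and the rule
   E := rq_mu(p; x1, x2).  In rq_mu the parameters p_0..p_{m-1} are the
   variables 0..m-1 and x1, x2 are the variables m and m+1. *)
Record rquery := RQ { rq_par : nat; rq_mu : formula }.

Definition ins_E : rquery :=
  RQ 2 (FOr (FRel SymE [:: 2; 3]) (FAnd (FEq 0 2) (FEq 1 3))).
Definition del_E : rquery :=
  RQ 2 (FAnd (FRel SymE [:: 2; 3]) (FNot (FAnd (FEq 0 2) (FEq 1 3)))).

Definition is_qf_insertion (r : rquery) : Prop :=
  qf (rq_mu r) /\ input_only (rq_mu r) /\
  exists phi, rq_mu r = FOr (FRel SymE [:: rq_par r; (rq_par r).+1]) phi.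

Fixpoint mem_rq (r : rquery) (l : seq rquery) : Prop :=
  match l with [::] => False | r' :: l' => r = r' \/ mem_rq r l' end.

(* Update formula for (rho, T_i) is evaluated in the
   environment p ++ x (parameters first, then the tuple of T_i). *)
Record dynprog := DynProg {
  aux_ar : seq nat;
  q_idx : nat;
  upd : rquery -> nat -> formula }.

Section Sem.
Variable D : finType.

Record state := State { st_E : rel D; st_aux : nat -> seq D -> bool }.

Definition interp (s : state) (r : sym) (t : seq D) : bool :=
  match r with
  | SymE => if t is [:: a; b] then st_E s a b else false
  | SymAux i => st_aux s i t
  end.

Fixpoint eval (s : state) (env : seq D) (f : formula) : bool :=
  match f with
  | FTrue => true
  | FFalse => false
  | FRel r args =>
      let t := pmap (onth env) args in (size t == size args) && interp s r t
  | FEq i j =>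
      match onth env i, onth env j with
      | Some a, Some b => a == b
      | _, _ => false
      end
  | FNot g => ~~ eval s env g
  | FAnd g h => eval s env g && eval s env h
  | FOr g h => eval s env g || eval s env h
  | FEx g => [exists d, eval s (d :: env) g]
  | FAll g => [forall d, eval s (d :: env) g]
  end.

Definition input_state (e : rel D) : state := State e (fun _ _ => false).

Definition apply_change (r : rquery) (a : seq D) (e : rel D) : rel D :=
  fun b1 b2 => eval (input_state e) (a ++ [:: b1; b2]) (rq_mu r).

Definition has_cycle (e : rel D) : Prop := exists u v, e u v && connect e v u.
Definition acyclic (e : rel D) : Prop := ~ has_cycle e.

Definition reachQ (e : rel D) (t : seq D) : bool :=
  if t is [:: u; v] then connect e u v else false.

Definition init_state : state := State (fun _ _ => false) (fun _ _ => false).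

Definition step (P : dynprog) (c : rquery * seq D) (s : state) : state :=
  State (apply_change c.1 c.2 (st_E s))
        (fun i t => [&& i < size (aux_ar P), size t == nth 0 (aux_ar P) i
                      & eval s (c.2 ++ t) (upd P c.1 i)]).

Definition run (P : dynprog) (alpha : seq (rquery * seq D)) : state :=
  foldl (fun s c => step P c s) init_state alpha.

Fixpoint good_run (P : dynprog) (Dl : seq rquery) (s : state)
    (alpha : seq (rquery * seq D)) : Prop :=
  match alpha with
  | [::] => True
  | c :: alpha' =>
      [/\ mem_rq c.1 Dl, size c.2 = rq_par c.1,
          acyclic (st_E (step P c s)) & good_run P Dl (step P c s) alpha']
  end.

End Sem.

Definition maintains_reach_dag (P : dynprog) (Dl : seq rquery) : Prop :=
  (q_idx P < size (aux_ar P)) /\ nth 0 (aux_ar P) (q_idx P) = 2 /\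
  forall (D : finType) (alpha : seq (rquery * seq D)),
    alpha <> [::] -> good_run P Dl (init_state D) alpha ->
    st_aux (run P alpha) (q_idx P) =1 reachQ (st_E (run P alpha)).

(* Main.v *)
Require Import Defs.
From HB Require Import structures.
From mathcomp Require Import all_boot.
From mathcomp Require Import zify.
Set Implicit Arguments. Unset Strict Implicit. Unset Printing Implicit Defensive.

Section Sz.
Variable T : Type.
Lemma sz1 (s1 s2 s3 : seq T) (z1 z2 : T) : size (s1 ++ s3) < size (s1 ++ z1 :: s2 ++ z2 :: s3).
Proof. rewrite !size_cat /= size_cat /=; lia. Qed.
Lemma sz2 (s1 s2 s3 : seq T) (z1 z2 z : T) : size (s1 ++ z :: s3) < size (s1 ++ z1 :: s2 ++ z2 :: s3).
Proof. rewrite !size_cat /= size_cat /=; lia. Qed.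
Lemma sz3 (s1 s2 s3 : seq T) (z1 z2 z : T) : size (s2 ++ [:: z]) < size (s1 ++ z1 :: s2 ++ z2 :: s3).
Proof. rewrite !size_cat /= size_cat /=; lia. Qed.
Lemma sz4 (s1 s2 s3 : seq T) (z1 z2 : T) : size s2 < size (s1 ++ z1 :: s2 ++ z2 :: s3).
Proof. rewrite !size_cat /= size_cat /=; lia. Qed.
End Sz.
Ltac solve_sz := first [apply: sz1|apply: sz2|apply: sz3|apply: sz4].

Section Comb.
Variable D : finType.

Fixpoint rch (R : rel D) (n : nat) (x y : D) : bool :=
  if n is n'.+1 then [exists z, R x z && rch R n' z y] else R x y.

Lemma eq_rch R R' : R =2 R' -> forall n, rch R n =2 rch R' n.
Proof.
move=> eR; elim=> [|n IH] x y /=; first exact: eR.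
by apply: eq_existsb => z; rewrite eR IH.
Qed.

Lemma rchS (R : rel D) (Rrefl : forall x, R x x) n x y : rch R n x y -> rch R n.+1 x y.
Proof. by move=> h /=; apply/existsP; exists x; rewrite Rrefl h. Qed.

Lemma rch_le (R : rel D) (Rrefl : forall x, R x x) n m x y :
  n <= m -> rch R n x y -> rch R m x y.
Proof.
move=> /subnK <-; elim: (m - n) => [|k IH] //=.
  move=> h; apply: rchS => //; exact: IH.
Qed.

Lemma rch_sound (R : rel D) (G : rel D) : (forall x y, R x y -> connect G x y) ->
  forall n x y, rch R n x y -> connect G x y.
Proof.
move=> hR; elim=> [|n IH] x y /=; first exact: hR.
by case/existsP=> z /andP[/hR h1 /IH h2]; exact: connect_trans h1 h2.
Qed.

Lemma dup_split (T T' : eqType) (f : T -> T') (s : seq T) :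
  ~~ uniq (map f s) -> exists s1 z1 s2 z2 s3,
    s = s1 ++ z1 :: s2 ++ z2 :: s3 /\ f z1 = f z2.
Proof.
elim: s => [|a s IH] //=; rewrite negb_and negbK; case/orP.
  case/mapP=> z2 zin fa; case/splitPr: zin => s2 s3.
  by exists [::], a, s2, z2, s3.
move/IH=> [s1 [z1 [s2 [z2 [s3 [-> e]]]]]].
by exists (a :: s1), z1, s2, z2, s3.
Qed.

Variables (E G : rel D).
Hypothesis EG : forall x y, E x y -> G x y.
Definition gen x y := [&& x != y, ~~ E x y & ~~ E y x].
Variables (K : finType) (pr : D -> K).
Hypothesis HG : forall x y x' y', pr x = pr x' -> pr y = pr y' ->
  gen x y -> gen x' y' -> G x y = G x' y'.

Definition key (z : D * D) := (pr z.1, pr z.2).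

Fixpoint W (u : D) (s : seq (D * D)) (v : D) : Prop :=
  match s with
  | [::] => connect E u v
  | z :: s' => [/\ connect E u z.1, gen z.1 z.2, G z.1 z.2 & W z.2 s' v]
  end.

Lemma W_pre u w s v : connect E u w -> W w s v -> W u s v.
Proof.
case: s => [|z s] /= h; first exact: connect_trans.
by case=> h1 h2 h3 h4; split => //; exact: connect_trans h1.
Qed.

Lemma W_post u s w w' : W u s w -> connect E w w' -> W u s w'.
Proof.
elim: s u => [|z s IH] u /=; first exact: connect_trans.
by case=> h1 h2 h3 h4 h; split => //; exact: IH.
Qed.

Lemma W_app u s1 w s2 v : W u s1 w -> W w s2 v -> W u (s1 ++ s2) v.
Proof.
elim: s1 u => [|z s IH] u /=; first exact: W_pre.
by case=> h1 h2 h3 h4 h; split => //; exact: IH h4 h.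
Qed.

Lemma W_split u s1 z s2 v :
  W u (s1 ++ z :: s2) v <-> [/\ W u s1 z.1, gen z.1 z.2, G z.1 z.2 & W z.2 s2 v].
Proof.
elim: s1 u => [|z' s1 IH] u /=; first by [].
split.
  by case=> a b c /IH [d e f g]; split => //; split.
by case=> [[a b c d] e f g]; split => //; apply/IH; split.
Qed.

Lemma EGc x y : connect E x y -> connect G x y.
Proof. apply: connect_sub => a b h; exact: connect1 (EG h). Qed.

Lemma W_conn u s v : W u s v -> connect G u v.
Proof.
elim: s u => [|z s IH] u /=; first exact: EGc.
case=> h1 _ h3 /IH h4.
exact: connect_trans (EGc h1) (connect_trans (connect1 h3) h4).
Qed.

Lemma decomp u v : (forall x y, G x y -> E x y || gen x y) ->
  connect G u v -> exists s, W u s v.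
Proof.
move=> cl /connectP[p pth ->].
elim: p u pth => [|z p IH] u /=; first by move=> _; exists [::]; exact: connect0.
case/andP=> Guz /IH [s Ws].
case: (boolP (E u z)) => Euz; first by exists s; exact: W_pre (connect1 Euz) Ws.
have gz : gen u z by move: (cl _ _ Guz); rewrite (negbTE Euz).
by exists ((u, z) :: s) => /=; split => //; exact: connect0.
Qed.

Lemma min_ex (P : seq (D * D) -> Prop) : (exists s, P s) ->
  (forall s, P s -> ~~ uniq (map key s) -> 2 < size s ->
     exists s', P s' /\ size s' < size s) ->
  exists s, P s /\ (uniq (map key s) \/ size s <= 2).
Proof.
move=> [s Ps] red.
have [n le] : exists n, size s <= n by exists (size s).
elim: n s le Ps => [|n IH] s le Ps.
  by exists s; split => //; right; exact: leq_trans le _.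
case: (boolP (uniq (map key s))) => u; first by exists s; split => //; left.
case: (leqP (size s) 2) => h; first by exists s; split => //; right.
have [s' [Ps' lt]] := red s Ps u h.
by apply: (IH s') => //; rewrite -ltnS; exact: leq_trans lt le.
Qed.

Definition R1 x y := connect E x y || G x y.
Definition Nb := 2 * (#|{: K * K}| + 2).

Lemma R1refl x : R1 x x. Proof. by rewrite /R1 connect0. Qed.

Lemma R1_sound x y : R1 x y -> connect G x y.
Proof. by case/orP => [/EGc //|/connect1]. Qed.

Lemma rchSS (R : rel D) n x z w y : R x z -> R z w -> rch R n w y -> rch R n.+2 x y.
Proof.
move=> h1 h2 h3; apply/existsP; exists z; rewrite h1 /=.
by apply/existsP; exists w; rewrite h2.
Qed.

Lemma W_rch u s v : W u s v -> rch R1 (2 * size s) u v.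
Proof.
elim: s u => [|[x y] s IH] u; first by move=> h; rewrite /= /R1 h.
move=> [h1 h2 h3 /IH h4]; simpl in h1, h3.
rewrite (_ : 2 * size ((x, y) :: s) = (2 * size s).+2); last by rewrite /=; lia.
apply: (rchSS (z := x)) h4; first by rewrite /R1 h1.
by rewrite /R1 h3 orbT.
Qed.

Lemma size_bound (s : seq (D * D)) :
  uniq (map key s) \/ size s <= 2 -> size s <= #|{: K * K}| + 2.
Proof.
case=> [u|h]; last by lia.
have := card_uniqP u; rewrite size_map => <-.
apply: leq_trans (max_card _) _; exact: leq_addr.
Qed.

Lemma W_rchN u s v : uniq (map key s) \/ size s <= 2 -> W u s v -> rch R1 Nb u v.
Proof.
move=> /size_bound h /W_rch; apply: rch_le; first exact: R1refl.
rewrite /Nb; lia.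
Qed.

Theorem thmA u v : ~ has_cycle G -> connect G u v = rch R1 Nb u v.
Proof.
move=> acyc; apply/idP/idP; last by move=> h; exact: (rch_sound (G := G) R1_sound h).
move=> cuv.
have cl : forall x y, G x y -> E x y || gen x y.
  move=> x y Gxy; case: (boolP (E x y)) => //= Exy.
  rewrite /gen Exy /=; apply/andP; split.
    by apply/negP => /eqP exy; subst; apply: acyc; exists y, y; rewrite Gxy connect0.
  by apply/negP => Eyx; apply: acyc; exists x, y; rewrite Gxy connect1 // EG.
have ex := decomp cl cuv.
suff red : forall s, W u s v -> ~~ uniq (map key s) -> 2 < size s ->
     exists s', W u s' v /\ size s' < size s.
  by have [s [Ws hs]] := min_ex ex red; exact: W_rchN hs Ws.
move=> s Ws nu _; move: Ws nu => /[swap] /dup_split [s1 [[x y] [s2 [[x2 y2] [s3 [-> ek]]]]]].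
case: ek => ex1 ey1.
move=> /W_split [W1 gxy Gxy /W_split [W2 g2 G2 W3]] /=.
have cyc : connect G y y2 := connect_trans (W_conn W2) (connect1 G2).
case: (boolP (E x y2)) => Exy2.
  exists (s1 ++ s3); split; first exact: W_app (W_post W1 (connect1 Exy2)) W3.
  by solve_sz.
case: (boolP (x == y2)) => [/eqP exy2|nxy2].
  by exfalso; apply: acyc; exists x, y; rewrite Gxy; subst.
case: (boolP (E y2 x)) => Ey2x.
  by exfalso; apply: acyc; exists x, y; rewrite Gxy (connect_trans cyc (connect1 (EG Ey2x))).
have g' : gen x y2 by rewrite /gen nxy2 Exy2 Ey2x.
have Gxy2 : G x y2 by rewrite (HG (x' := x) (y' := y) erefl (esym ey1) g' gxy).
exists (s1 ++ (x, y2) :: s3); split; first by apply/W_split.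
by solve_sz.
Qed.

Theorem thmB : has_cycle G <-> exists u v, G u v && rch R1 Nb v u.
Proof.
split; last first.
  by move=> [u [v /andP[Guv h]]]; exists u, v; rewrite Guv (rch_sound (G := G) R1_sound h).
move=> [u [v /andP[Guv cvu]]].
case: (pickP (fun xy : D * D => G xy.1 xy.2 && ~~ (E xy.1 xy.2 || gen xy.1 xy.2)))
  => [[x y] /= /andP[Gxy]|nodirty].
  rewrite negb_or => /andP[nE]; rewrite /gen (negbTE nE) /= negb_and !negbK => /orP[/eqP exy|Eyx].
    subst; exists y, y; rewrite Gxy /=; apply: (rch_le R1refl (n := 0)) => //.
    exact: R1refl.
  exists x, y; rewrite Gxy /=; apply: (rch_le R1refl (n := 0)) => //.
  by rewrite /= /R1 (connect1 Eyx).
have cl : forall x y, G x y -> E x y || gen x y.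
  by move=> x y Gxy; move: (nodirty (x, y)); rewrite /= Gxy /= => /negbFE.
have [s Ws] := decomp cl cvu.
suff red : forall s, (exists u v, G u v /\ W v s u) -> ~~ uniq (map key s) -> 2 < size s ->
     exists s', (exists u v, G u v /\ W v s' u) /\ size s' < size s.
  have [s' [[u' [v' [Guv' Ws']]] hs]] :=
    @min_ex (fun s => exists u v, G u v /\ W v s u) (ex_intro _ s (ex_intro _ u (ex_intro _ v (conj Guv Ws)))) red.
  by exists u', v'; rewrite Guv' (W_rchN hs Ws').
clear s Ws; move=> s Ws nu lt3; move: Ws nu => /[swap] /dup_split [s1 [[x y] [s2 [[x2 y2] [s3 [es ek]]]]]].
case: ek => ex1 ey1.
move=> [u0 [v0 [Guv0]]]; rewrite es.
move=> /W_split [W1 gxy Gxy /W_split [W2 g2 G2 W3]] /=.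
case: (boolP (E x y2)) => Exy2.
  exists (s1 ++ s3); split.
    by exists u0, v0; split => //; exact: W_app (W_post W1 (connect1 Exy2)) W3.
  by solve_sz.
case: (boolP (x == y2)) => [/eqP exy2|nxy2].
  exists (s2 ++ [:: (x2, y2)]); split.
    exists x, y; split => //; apply/W_split; split => //=.
    by rewrite exy2 connect0.
  by solve_sz.
case: (boolP (E y2 x)) => Ey2x; last first.
  have g' : gen x y2 by rewrite /gen nxy2 Exy2 Ey2x.
  have Gxy2 : G x y2 by rewrite (HG (x' := x) (y' := y) erefl (esym ey1) g' gxy).
  exists (s1 ++ (x, y2) :: s3); split.
    by exists u0, v0; split => //; apply/W_split.
  by solve_sz.
case: (boolP (E x2 y)) => Ex2y.
  exists s2; split; first by exists x2, y; split => //; exact: EG.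
  by solve_sz.
have small : (x2 == y) || E y x2 -> exists s', (exists u v, G u v /\ W v s' u) /\ size s' < size (s1 ++ (x, y) :: s2 ++ (x2, y2) :: s3).
  move=> h; exists [:: (x, y); (x2, y2)]; split; last by move: lt3; rewrite es.
  exists y2, x; split; first exact: EG.
  rewrite /=; split => //; split => //; try exact: connect0.
  by case/orP: h => [/eqP ->|/connect1 //]; exact: connect0.
case: (boolP (x2 == y)) => [h|nx2y]; first by apply: small; rewrite h.
case: (boolP (E y x2)) => [h|Eyx2]; first by apply: small; rewrite h orbT.
have g' : gen x2 y by rewrite /gen nx2y Ex2y Eyx2.
have Gx2y : G x2 y by rewrite (HG (x' := x) (y' := y) (esym ex1) erefl g' gxy).
exists s2; split; first by exists x2, y; split; [exact: Gx2y|exact: W2].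
by solve_sz.
Qed.

End Comb.

Definition up (f : nat -> nat) n := if n is k.+1 then (f k).+1 else 0.
Fixpoint ren (f : nat -> nat) (g : formula) : formula :=
  match g with
  | FTrue => FTrue | FFalse => FFalse
  | FRel r args => FRel r (map f args)
  | FEq i j => FEq (f i) (f j)
  | FNot h => FNot (ren f h)
  | FAnd a b => FAnd (ren f a) (ren f b)
  | FOr a b => FOr (ren f a) (ren f b)
  | FEx h => FEx (ren (up f) h)
  | FAll h => FAll (ren (up f) h)
  end.

Fixpoint strip (g : formula) : formula :=
  match g with
  | FRel (SymAux _) _ => FFalse
  | FNot h => FNot (strip h)
  | FAnd a b => FAnd (strip a) (strip b)
  | FOr a b => FOr (strip a) (strip b)
  | FEx h => FEx (strip h)
  | FAll h => FAll (strip h)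
  | _ => g
  end.

Section Sem2.
Variable D : finType.
Implicit Types (s : state D) (env : seq D).

Lemma eval_ren s g : forall f env env', (forall i, onth env (f i) = onth env' i) ->
  eval s env (ren f g) = eval s env' g.
Proof.
elim: g => //=.
- move=> r args f env env' h.
  have -> : pmap (onth env) (map f args) = pmap (onth env') args.
    by elim: args => //= a l ->; rewrite h.
  by rewrite size_map.
- by move=> i j f env env' h; rewrite !h.
- by move=> g IH f env env' h; rewrite (IH f env env').
- by move=> g1 IH1 g2 IH2 f env env' h; rewrite (IH1 f env env') // (IH2 f env env').
- by move=> g1 IH1 g2 IH2 f env env' h; rewrite (IH1 f env env') // (IH2 f env env').
- by move=> g IH f env env' h; apply: eq_existsb => d; apply: IH => -[|i] //=.
- by move=> g IH f env env' h; apply: eq_forallb => d; apply: IH => -[|i] //=.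
Qed.

Lemma eval_strip s env g : eval s env (strip g) = eval (input_state (st_E s)) env g.
Proof.
elim: g env => //=.
- by case=> [|n] args env //=; rewrite andbF.
- by move=> g IH env; rewrite IH.
- by move=> g1 IH1 g2 IH2 env; rewrite IH1 IH2.
- by move=> g1 IH1 g2 IH2 env; rewrite IH1 IH2.
- by move=> g IH env; apply: eq_existsb => d; rewrite IH.
- by move=> g IH env; apply: eq_forallb => d; rewrite IH.
Qed.

Definition oE (E : rel D) (o1 o2 : option D) :=
  if o1 is Some a then (if o2 is Some b then E a b else false) else false.
Definition oEq (o1 o2 : option D) :=
  match o1, o2 with Some a, Some b => a == b | _, _ => false end.

Lemma evalE_rel (E : rel D) env args :
  eval (input_state E) env (FRel SymE args) =
  (if args is [:: i; j] then oE E (onth env i) (onth env j) else false).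
Proof.
case: args => [|i [|j [|k l]]] //=.
- by case: (onth env i).
- by case: (onth env i) => [a|]; case: (onth env j) => [b|].
- have hl : forall t : seq D, (size t == (size l).+3) && interp (input_state E) SymE t = false by case=> [|a [|b [|c t]]] //=; rewrite ?andbF.
  exact: hl.
Qed.

Lemma eval_atoms (E : rel D) env env' g : qf g ->
  (forall i j, oE E (onth env i) (onth env j) = oE E (onth env' i) (onth env' j)) ->
  (forall i j, oEq (onth env i) (onth env j) = oEq (onth env' i) (onth env' j)) ->
  eval (input_state E) env g = eval (input_state E) env' g.
Proof.
move=> + hE hEq; elim: g => //.
- move=> [|n] args _; last by rewrite /= !andbF.
  by rewrite !evalE_rel; case: args => [|i [|j [|k l]]].
- by move=> i j _; exact: (hEq i j).
- by move=> g IH /= /IH ->.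
- by move=> g1 IH1 g2 IH2 /= /andP[/IH1 -> /IH2 ->].
- by move=> g1 IH1 g2 IH2 /= /andP[/IH1 -> /IH2 ->].
Qed.

Lemma slot (p : seq D) x y x' y' i :
  (exists c, c \in p /\ onth (p ++ [:: x; y]) i = Some c /\ onth (p ++ [:: x'; y']) i = Some c) \/
  (onth (p ++ [:: x; y]) i = Some x /\ onth (p ++ [:: x'; y']) i = Some x') \/
  (onth (p ++ [:: x; y]) i = Some y /\ onth (p ++ [:: x'; y']) i = Some y') \/
  (onth (p ++ [:: x; y]) i = None /\ onth (p ++ [:: x'; y']) i = None).
Proof.
rewrite !onth_cat; case: ltnP => h.
  left; exists (nth x p i); rewrite mem_nth // onthE (nth_map x) //.
case: (i - size p) => [|[|k]] /=; [right; left | right; right; left | right; right; right];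
  by rewrite ?onth0n.
Qed.

Definition prof (E : rel D) (p : seq D) (x : D) :
  {ffun 'I_(size p) -> bool * bool * bool} * bool :=
  ([ffun j => (E x (tnth (in_tuple p) j), E (tnth (in_tuple p) j) x,
               x == tnth (in_tuple p) j)], E x x).

Lemma prof_eq E p x x' : prof E p x = prof E p x' -> E x x = E x' x' /\
  forall c, c \in p -> [/\ E x c = E x' c, E c x = E c x', (x == c) = (x' == c)
                        & (c == x) = (c == x')].
Proof.
case=> hf hxx; split => // c cp.
have /tnthP [j ->] : c \in in_tuple p by [].
move/ffunP: hf => /(_ j); rewrite !ffunE; case=> e1 e2 e3.
by split => //; rewrite eq_sym e3 eq_sym.
Qed.

Lemma phi_inv (E : rel D) p phi x y x' y' : qf phi ->
  prof E p x = prof E p x' -> prof E p y = prof E p y' ->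
  gen E x y -> gen E x' y' ->
  eval (input_state E) (p ++ [:: x; y]) phi = eval (input_state E) (p ++ [:: x'; y']) phi.
Proof.
move=> q /prof_eq [hxx hx] /prof_eq [hyy hy] /and3P[nxy nExy nEyx] /and3P[nxy' nExy' nEyx'].
have e1 := negbTE nxy; have e2 := negbTE nxy'.
have e3 : (y == x) = false by rewrite eq_sym.
have e4 : (y' == x') = false by rewrite eq_sym.
have e5 := negbTE nExy; have e6 := negbTE nExy'; have e7 := negbTE nEyx; have e8 := negbTE nEyx'.
apply: eval_atoms => // i j;
case: (slot p x y x' y' i) => [[c [cp [-> ->]]]|[[-> ->]|[[-> ->]|[-> ->]]]];
case: (slot p x y x' y' j) => [[c' [cp' [-> ->]]]|[[-> ->]|[[-> ->]|[-> ->]]]] //=;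
  try (have [a1 a2 a3 a4] := hx c cp; have [b1 b2 b3 b4] := hy c cp);
  try (have [a1' a2' a3' a4'] := hx c' cp'; have [b1' b2' b3' b4'] := hy c' cp');
  by rewrite ?eqxx ?e1 ?e2 ?e3 ?e4 ?e5 ?e6 ?e7 ?e8.
Qed.

End Sem2.

Definition TF i j := FOr (FRel (SymAux 0) [:: i; j]) (FEq i j).

Section Forms.
Variables (m : nat) (phi : formula).
Definition Kt := ({ffun 'I_m -> bool * bool * bool} * bool)%type.
Definition Nf := 2 * (#|{: Kt * Kt}| + 2).
Definition BIG := m + Nf + 5.
Definition fmap sh i j k :=
  if k < m then sh + k else if k == m then i else if k == m.+1 then j else k + BIG.
Definition PhiF i j sh := ren (fmap sh i j) (strip phi).
Definition R1F i j sh := FOr (TF i j) (PhiF i j sh).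
Fixpoint chainF n i j sh :=
  if n is n'.+1 then FEx (FAnd (R1F i.+1 0 sh.+1) (chainF n' 0 j.+1 sh.+1))
  else R1F i j sh.
Definition insF := chainF Nf m m.+1 0.
Definition gammaF :=
  FEx (FEx (FAnd (FOr (FRel SymE [:: 1; 0]) (PhiF 1 0 2)) (chainF Nf 0 1 2))).
End Forms.

Section Sem3.
Variable D : finType.
Implicit Types (s : state D) (env : seq D).

Definition Tof s x y := st_aux s 0 [:: x; y] || (x == y).
Definition phis s a phi x y := eval (input_state (st_E s)) (a ++ [:: x; y]) phi.

Lemma eval_TF s env i j x y : onth env i = Some x -> onth env j = Some y ->
  eval s env (TF i j) = Tof s x y.
Proof. by move=> hi hj; rewrite /= hi hj. Qed.

Lemma eval_PhiF s (a : seq D) phi env i j sh x y :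
  (forall k, k < size a -> onth env (sh + k) = onth a k) ->
  onth env i = Some x -> onth env j = Some y -> size env <= BIG (size a) ->
  eval s env (PhiF (size a) phi i j sh) = phis s a phi x y.
Proof.
move=> hp hi hj hb; rewrite /PhiF (@eval_ren D s (strip phi) _ env (a ++ [:: x; y])) ?eval_strip //.
move=> k; rewrite /fmap onth_cat; case: ltnP => hk; first exact: hp.
case: eqP => [->|nk]; first by rewrite hi subnn.
case: eqP => [->|nk2]; first by rewrite hj subSnn.
rewrite onth_default; last by apply: leq_trans hb _; exact: leq_addl.
rewrite onth_default //=.
have : k <> size a by []. have : k <> (size a).+1 by []. move: hk; clear; lia.
Qed.

Lemma eval_chain s (a : seq D) phi n : forall env i j sh x y,
  (forall k, k < size a -> onth env (sh + k) = onth a k) ->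
  onth env i = Some x -> onth env j = Some y -> size env + n <= BIG (size a) ->
  eval s env (chainF (size a) phi n i j sh) =
  rch (fun x y => Tof s x y || phis s a phi x y) n x y.
Proof.
have evalOr : forall env f g, eval s env (FOr f g) = eval s env f || eval s env g by [].
have evalAnd : forall env f g, eval s env (FAnd f g) = eval s env f && eval s env g by [].
elim: n => [|n IH] env i j sh x y hp hi hj hb.
  rewrite (_ : chainF _ _ 0 _ _ _ = R1F (size a) phi i j sh) // /R1F evalOr.
  by rewrite (eval_TF _ hi hj) (eval_PhiF _ _ hp hi hj) // -(addn0 (size env)).
rewrite (_ : chainF _ _ n.+1 _ _ _ = FEx (FAnd (R1F (size a) phi i.+1 0 sh.+1) (chainF (size a) phi n 0 j.+1 sh.+1))) //.
rewrite (_ : rch _ n.+1 x y = [exists z, (Tof s x z || phis s a phi x z) && rch (fun x y => Tof s x y || phis s a phi x y) n z y]) //.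
rewrite (_ : forall f, eval s env (FEx f) = [exists d, eval s (d :: env) f]) //.
apply: eq_existsb => d; rewrite evalAnd /R1F evalOr.
have hp' : forall k, k < size a -> onth (d :: env) (sh.+1 + k) = onth a k.
  by move=> k hk; rewrite addSn /= hp.
have hb' : size (d :: env) + n <= BIG (size a) by rewrite /=; lia.
rewrite (@eval_TF s (d :: env) i.+1 0 x d) // (@eval_PhiF s a phi (d :: env) i.+1 0 sh.+1 x d hp') //;
  last by apply: leq_trans hb'; exact: leq_addr.
by rewrite (IH (d :: env) 0 j.+1 sh.+1 d y).
Qed.

Lemma apply_ins r (a : seq D) E phi :
  rq_mu r = FOr (FRel SymE [:: rq_par r; (rq_par r).+1]) phi -> size a = rq_par r ->
  apply_change r a E =2 (fun x y => E x y || eval (input_state E) (a ++ [:: x; y]) phi).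
Proof.
move=> hm ha x y; rewrite /apply_change hm -ha.
have h1 : onth (a ++ [:: x; y]) (size a) = Some x by rewrite onth_cat ltnn subnn.
have h2 : onth (a ++ [:: x; y]) (size a).+1 = Some y.
  by rewrite onth_cat ltnNge leqnSn /= subSnn.
rewrite (_ : forall env f g, eval (input_state E) env (FOr f g) =
   eval (input_state E) env f || eval (input_state E) env g) //.
by rewrite evalE_rel h1 h2.
Qed.

End Sem3.

Definition DEL := FAnd (TF 2 3) (FOr (FNot (FRel SymE [:: 0; 1]))
  (FOr (FNot (FAnd (TF 2 0) (TF 1 3)))
   (FEx (FEx (FAnd (TF 4 1) (FAnd (FAnd (FRel SymE [:: 1; 0])
        (FNot (FAnd (FEq 2 1) (FEq 3 0))))
      (FAnd (TF 0 5) (FAnd (TF 1 2) (FNot (TF 0 2)))))))))).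

Section Del.
Variable D : finType.
Variables (E : rel D) (a b : D).
Definition Ed (u w : D) := E u w && ~~ ((a == u) && (b == w)).
Definition delspec (T : rel D) x y :=
  T x y && [|| ~~ E a b, ~~ (T x a && T b y) |
   [exists u, exists w, T x u && (Ed u w && (T w y && (T u a && ~~ T w a)))]].

Lemma eval_DEL s (x y : D) : st_E s = E ->
  eval s [:: a; b; x; y] DEL = delspec (Tof s) x y.
Proof. by move=> hs; rewrite /delspec /Ed -hs. Qed.

Lemma delspec_ext T T' : T =2 T' -> delspec T =2 delspec T'.
Proof.
move=> h x y; rewrite /delspec !h; congr (_ && [|| _, _ | _]).
by apply: eq_existsb => u; apply: eq_existsb => w; rewrite !h.
Qed.

Lemma Ed_sub u w : Ed u w -> E u w.
Proof. by case/andP. Qed.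

Lemma Edc x y : connect Ed x y -> connect E x y.
Proof. by apply: connect_sub => u w /Ed_sub /connect1. Qed.

Lemma avoid x y : connect E x y -> (E a b -> ~~ (connect E x a && connect E b y)) ->
  connect Ed x y.
Proof.
move/connectP=> [p pth ->]; elim: p x pth => [|z p IH] x /=.
  by move=> _ _; exact: connect0.
case/andP=> Exz pth h.
have Edxz : Ed x z.
  rewrite /Ed Exz /=; apply/negP => /andP[/eqP ax /eqP bz]; subst.
  move: (h Exz); rewrite connect0 /=; apply/negP/negPn; apply/connectP; by exists p.
apply: connect_trans (connect1 Edxz) (IH z pth _) => Eab.
apply/negP => /andP[za bl]; move: (h Eab).
by rewrite (connect_trans (connect1 Exz) za) bl.
Qed.

Lemma exit p x : path Ed x p -> connect E x a -> ~~ connect E (last x p) a ->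
  exists u w, [&& connect E x u, Ed u w, connect E w (last x p), connect E u a
                & ~~ connect E w a].
Proof.
elim: p x => [|z p IH] x /=; first by move=> _ ->.
case/andP=> Edxz pth xa.
case: (boolP (connect E z a)) => za.
  move=> /(IH z pth za) [u [w /and5P[zu uw wl ua wa]]]; exists u, w.
  by rewrite (connect_trans (connect1 (Ed_sub Edxz)) zu) uw wl ua wa.
move=> _; exists x, z; rewrite connect0 Edxz xa za /= andbT.
by apply: Edc; apply/connectP; exists p.
Qed.

Theorem del_correct : ~ has_cycle E -> forall x y,
  connect Ed x y = delspec (connect E) x y.
Proof.
move=> acyc x y; apply/idP/idP.
- move=> cxy; rewrite /delspec (Edc cxy) /=.
  case: (boolP (E a b)) => //= Eab.
  case: (boolP (connect E x a && connect E b y)) => //= /andP[xa bY].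
  move/connectP: cxy => [p pth ey].
  have yna : ~~ connect E (last x p) a.
    rewrite -ey; apply/negP => ya; apply: acyc; exists a, b.
    by rewrite Eab (connect_trans bY ya).
  have [u [w h]] := exit pth xa yna.
  by apply/existsP; exists u; apply/existsP; exists w; rewrite -ey in h.
- rewrite /delspec => /andP[cxy /orP[nEab|/orP[nxab|/existsP[u /existsP[w]]]]].
  + by apply: avoid cxy _ => Eab; rewrite Eab in nEab.
  + by apply: avoid cxy _ => _.
  + move=> /and5P[xu uw wy ua wa].
    apply: connect_trans (avoid xu _) (connect_trans (connect1 uw) (avoid wy _)).
      move=> Eab; apply/negP => /andP[_ bu]; apply: acyc; exists a, b.
      by rewrite Eab (connect_trans bu ua).
    by rewrite (negbTE wa).
Qed.

End Del.

Definition updF (r : rquery) (i : nat) : formula :=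
  match rq_mu r with
  | FOr (FRel SymE _) phi => insF (rq_par r) phi
  | _ => DEL
  end.
Definition theP := DynProg [:: 2] 0 updF.

Section Main.
Variable D : finType.
Implicit Types (s : state D).
Definition Inv s := forall u v, Tof s u v = connect (st_E s) u v.
Definition Good s := Inv s /\ ~ has_cycle (st_E s).
Definition ExactQ s := forall t, st_aux s 0 t = reachQ (st_E s) t.

Lemma Exact_Inv s : ExactQ s -> Inv s.
Proof.
move=> h u v; rewrite /Tof h /=; case: eqP => [->|_]; by rewrite ?connect0 ?orbT ?orbF.
Qed.

Lemma hc_ext (e e' : rel D) : e =2 e' -> has_cycle e -> has_cycle e'.
Proof.
move=> h [u [v /andP[euv cvu]]]; exists u, v.
by rewrite -h euv -(eq_connect h) cvu.
Qed.

Lemma step_st_E c s : st_E (step theP c s) = apply_change c.1 c.2 (st_E s).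
Proof. by []. Qed.
Lemma step_aux c s t : st_aux (step theP c s) 0 t =
  (size t == 2) && eval s (c.2 ++ t) (updF c.1 0).
Proof. by []. Qed.

Lemma Good_init : Good (init_state D).
Proof.
split; last by move=> [u [v]].
move=> u v; rewrite /Tof /=; apply/eqP/idP => [->|]; first exact: connect0.
by case/connectP=> [[|z p]] //= _ ->.
Qed.

Lemma step_ins s r (a : seq D) phi : Inv s ->
  rq_mu r = FOr (FRel SymE [:: rq_par r; (rq_par r).+1]) phi -> qf phi ->
  size a = rq_par r -> ~ has_cycle (st_E (step theP (r, a) s)) ->
  ExactQ (step theP (r, a) s).
Proof.
move=> inv hm q ha acyc t; rewrite step_aux step_st_E /= /updF hm -ha.
set E := st_E s.
set G := fun x y => E x y || eval (input_state E) (a ++ [:: x; y]) phi.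
have hG : apply_change r a E =2 G := apply_ins E hm ha.
case: t => [|u [|v [|w t]]] //=.
rewrite (@eval_chain D s a phi (Nf (size a)) (a ++ [:: u; v]) (size a) (size a).+1 0 u v).
- rewrite (eq_connect hG).
  have EG : forall x y, E x y -> G x y by move=> x y h; rewrite /G h.
  have HG : forall x y x' y', prof E a x = prof E a x' -> prof E a y = prof E a y' ->
      gen E x y -> gen E x' y' -> G x y = G x' y'.
    move=> x y x' y' h1 h2 g g'; rewrite /G.
    have /and3P[_ /negbTE -> _] := g; have /and3P[_ /negbTE -> _] := g'.
    exact: phi_inv.
  have acG : ~ has_cycle G by move=> /(hc_ext (fun x y => esym (hG x y))).
  rewrite (@thmA D E G EG (Kt (size a)) (prof E a) HG u v acG).
  have -> : Nf (size a) = Nb (Kt (size a)) by [].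
  apply: eq_rch => x y; rewrite /R1 /G /phis inv -/E.
  by case: (boolP (E x y)) => h //=; rewrite (connect1 h).
- by move=> k hk; rewrite add0n onth_cat hk.
- by rewrite onth_cat ltnn subnn.
- by rewrite onth_cat ltnNge leqnSn /= subSnn.
- by rewrite size_cat /= /BIG; lia.
Qed.

Lemma step_del s (a : seq D) : Good s -> size a = rq_par del_E ->
  ExactQ (step theP (del_E, a) s).
Proof.
case: a => [|x [|y [|]]] // [inv acyc] _ t; rewrite step_aux step_st_E.
have hE : apply_change del_E [:: x; y] (st_E s) =2 Ed (st_E s) x y by [].
case: t => [|u [|v [|w t]]]; try by [].
rewrite (_ : size [:: u; v] == 2) // andTb (_ : updF del_E 0 = DEL) //.
rewrite (_ : ((del_E, [:: x; y]).2 ++ [:: u; v]) = [:: x; y; u; v]) //.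
rewrite (@eval_DEL D (st_E s) x y s u v) //.
rewrite (@delspec_ext D (st_E s) x y _ _ inv) -del_correct //.
Qed.

Lemma guard_ok s r (a : seq D) phi : Inv s ->
  rq_mu r = FOr (FRel SymE [:: rq_par r; (rq_par r).+1]) phi -> qf phi ->
  size a = rq_par r ->
  (eval s a (gammaF (rq_par r) phi) <-> has_cycle (apply_change r a (st_E s))).
Proof.
move=> inv hm q ha; rewrite -ha.
set E := st_E s.
set G := fun x y => E x y || eval (input_state E) (a ++ [:: x; y]) phi.
have hG : apply_change r a E =2 G := apply_ins E hm ha.
have EG : forall x y, E x y -> G x y by move=> x y h; rewrite /G h.
have HG : forall x y x' y', prof E a x = prof E a x' -> prof E a y = prof E a y' ->
    gen E x y -> gen E x' y' -> G x y = G x' y'.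
  move=> x y x' y' h1 h2 g g'; rewrite /G.
  have /and3P[_ /negbTE -> _] := g; have /and3P[_ /negbTE -> _] := g'.
  exact: phi_inv.
have -> : eval s a (gammaF (size a) phi) =
    [exists u, exists v, G u v && rch (R1 E G) (Nb (Kt (size a))) v u].
  rewrite (_ : eval s a (gammaF (size a) phi) = [exists u, exists v,
     (E u v || eval s [:: v, u & a] (PhiF (size a) phi 1 0 2)) &&
     eval s [:: v, u & a] (chainF (size a) phi (Nf (size a)) 0 1 2)]) //.
  apply: eq_existsb => u; apply: eq_existsb => v.
  have hp : forall k, k < size a -> onth [:: v, u & a] (2 + k) = onth a k by [].
  have hb : size [:: v, u & a] + Nf (size a) <= BIG (size a) by rewrite /= /BIG; lia.
  rewrite (@eval_PhiF D s a phi [:: v, u & a] 1 0 2 u v hp) //; last first.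
    by apply: leq_trans hb; exact: leq_addr.
  rewrite (@eval_chain D s a phi (Nf (size a)) [:: v, u & a] 0 1 2 v u hp) //.
  have -> : Nf (size a) = Nb (Kt (size a)) by [].
  congr (_ && _); apply: eq_rch => x y; rewrite /R1 /G /phis inv -/E.
  by case: (boolP (E x y)) => h //=; rewrite (connect1 h).
split.
  move=> /existsP[u /existsP[v h]]; apply: (hc_ext (fun x y => esym (hG x y))).
  by apply/(thmB EG HG); exists u, v.
move=> /(hc_ext hG) /(thmB EG HG) [u [v h]].
by apply/existsP; exists u; apply/existsP; exists v.
Qed.

Lemma run_ok (Dl : seq rquery) :
  (forall r, mem_rq r Dl ->
     (exists phi, rq_mu r = FOr (FRel SymE [:: rq_par r; (rq_par r).+1]) phi /\ qf phi)
     \/ r = del_E) ->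
  forall alpha s, good_run theP Dl s alpha -> Good s ->
    Good (foldl (fun s c => step theP c s) s alpha) /\
    (alpha <> [::] -> ExactQ (foldl (fun s c => step theP c s) s alpha)).
Proof.
move=> hD; elim=> [|c alpha IH] s /=; first by move=> _ g; split.
case=> hm hsz hac hgr [inv acyc].
have ex : ExactQ (step theP c s).
  case: c hm hsz hac hgr => r a /= hm hsz hac hgr.
  case: (hD _ hm) => [[phi [hmu q]]|hdel]; first exact: step_ins inv hmu q hsz hac.
  by subst r; exact: step_del.
have g' : Good (step theP c s) by split => //; exact: Exact_Inv.
have [g'' ex''] := IH _ hgr g'.
split => // _.
by case: alpha hgr ex'' {IH g''} => [|c' alpha'] _ ex'' //=; apply: ex''.
Qed.

End Main.

Lemma mem_rq_cat r l1 l2 : mem_rq r (l1 ++ l2) -> mem_rq r l1 \/ mem_rq r l2.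
Proof. elim: l1 => [|x l IH] /=; [by right | by case=> [->|/IH]; tauto]. Qed.

Theorem theorem4p3 (Delta : seq rquery) :
  (forall r, mem_rq r Delta -> is_qf_insertion r) ->
  exists P : dynprog,
    maintains_reach_dag P (Delta ++ [:: ins_E; del_E]) /\
    forall r, mem_rq r Delta ->
      exists gamma : formula,
        forall (D : finType) (alpha : seq (rquery * seq D)),
          good_run P (Delta ++ [:: ins_E; del_E]) (init_state D) alpha ->
          forall a : seq D, size a = rq_par r ->
            (eval (run P alpha) a gamma <->
             has_cycle (apply_change r a (st_E (run P alpha)))).
Proof.
move=> hD.
have hD' : forall r, mem_rq r (Delta ++ [:: ins_E; del_E]) ->
    (exists phi, rq_mu r = FOr (FRel SymE [:: rq_par r; (rq_par r).+1]) phi /\ qf phi)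
    \/ r = del_E.
  move=> r /mem_rq_cat [/hD [q [_ [phi hmu]]]|/= [->|[->|//]]].
  - by left; exists phi; split => //; move: q; rewrite hmu.
  - by left; exists (FAnd (FEq 0 2) (FEq 1 3)).
  - by right.
exists theP; split.
  split; first by []. split; first by [].
  move=> D alpha ne gr.
  by have [_ ex] := run_ok hD' gr (Good_init D); exact: ex ne.
move=> r hr; have := hD r hr; rewrite /is_qf_insertion => -[q [_ [phi hmu]]].
exists (gammaF (rq_par r) phi) => D alpha gr a ha.
have [[inv _] _] := run_ok hD' gr (Good_init D).
apply: (guard_ok inv hmu _ ha).
by move: q; rewrite hmu.
Qed.
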